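(* Let $P$ be a finite poset with labeling $\omega:P\to\{1,\dots,p\}$ such that $P$ is $\omega$-consistent with rank function $\rho$, and assume $\omega(x)<\omega(y)$ whenever $\rho(x)<\rho(y)$. Let $x,y\in P$ be incomparable with $\rho(y)=\rho(x)+1$. Let $P'$ be the poset on the same set whose order is the transitive closure of the covering relations of $P$ together with $x\prec y$, and $P''$ the poset whose order is the transitive closure of the covering relations of $P$ together with $y\prec x$. Then $P'$ and $P''$, labeled by the same $\omega$, are $\omega$-consistent and have the same rank function $\rho$ as $(P,\omega)$.
   Context: Write $x\prec y$ if $y$ covers $x$ and $E(P)=\{(x,y):x\prec y\}$. A labeling $\omega$ induces $\epsilon:E(P)\to\{-1,1\}$ with $\epsilon(x,y)=1$ if $\omega(x)<\omega(y)$ and $-1$ otherwise. $P$ is $\epsilon$-graded ($\omega$-graded) if $\sum_{i=1}^n\epsilon(x_{i-1},x_i)$ is the same for every maximal chain $x_0\prec\cdots\prec x_n$. $P$ is $\omega$-consistent if each principal ideal $\Lambda_z=\{w\le z\}$ is graded with respect to the restriction of $\epsilon$ to $E(\Lambda_z)$; the rank function is $\rho(z)=$ this common sum for $\Lambda_z$, i.e. the $\epsilon$-weight of any saturated chain from a minimal element of $P$ to $z$. For $P'$ and $P''$, $\epsilon$ and $\rho$ are computed from their own covering relations with the same $\omega$. *)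

(* Defs.v *)
From mathcomp Require Import all_boot all_order all_algebra.
Set Implicit Arguments. Unset Strict Implicit. Unset Printing Implicit Defensive.
Import GRing.Theory Num.Theory.
Local Open Scope ring_scope.

Definition is_poset (T : finType) (le : rel T) : Prop :=
  reflexive le /\ antisymmetric le /\ transitive le.

(* A labeling: a bijection onto {1,...,p} with p = #|T|. *)
Definition is_labeling (T : finType) (w : T -> nat) : Prop :=
  injective w /\ forall t, (1 <= w t <= #|T|)%N.

Definition strict (T : finType) (le : rel T) (a b : T) : bool := (a != b) && le a b.

Definition coverS (T : finType) (le : rel T) (S : {set T}) (a b : T) : bool :=
  [&& a \in S, b \in S, strict le a b &
      [forall c, ~~ [&& c \in S, strict le a c & strict le c b]]].

Definition cover (T : finType) (le : rel T) (a b : T) : bool :=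
  coverS le [set: T] a b.

Definition minimalS (T : finType) (le : rel T) (S : {set T}) (a : T) : bool :=
  (a \in S) && [forall b, (b \in S) ==> ~~ strict le b a].

Definition maximalS (T : finType) (le : rel T) (S : {set T}) (a : T) : bool :=
  (a \in S) && [forall b, (b \in S) ==> ~~ strict le a b].

Definition maxchain (T : finType) (le : rel T) (S : {set T}) (c : seq T) : Prop :=
  match c with
  | [::] => False
  | x0 :: s => [/\ path (coverS le S) x0 s, minimalS le S x0 & maximalS le S (last x0 s)]
  end.

Definition eps (T : finType) (w : T -> nat) (a b : T) : int :=
  if (w a < w b)%N then 1 else -1.

Definition weight (T : finType) (w : T -> nat) (c : seq T) : int :=
  \sum_(p <- zip c (behead c)) eps w p.1 p.2.

Definition graded (T : finType) (le : rel T) (w : T -> nat) (S : {set T}) : Prop :=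
  forall c1 c2, maxchain le S c1 -> maxchain le S c2 -> weight w c1 = weight w c2.

Definition ideal (T : finType) (le : rel T) (z : T) : {set T} := [set u | le u z].

Definition consistent (T : finType) (le : rel T) (w : T -> nat) : Prop :=
  forall z, graded le w (ideal le z).

Definition rank_fun (T : finType) (le : rel T) (w : T -> nat) (rho : T -> int) : Prop :=
  forall z c, maxchain le (ideal le z) c -> weight w c = rho z.

Definition add_cover (T : finType) (le : rel T) (a b : T) : rel T :=
  connect (fun u v => cover le u v || ((u == a) && (v == b))).

(* Main.v *)
Require Import Defs.
From mathcomp Require Import all_boot all_order all_algebra.
From mathcomp Require Import zify.
Set Implicit Arguments. Unset Strict Implicit. Unset Printing Implicit Defensive.

Lemma cover_below (T : finType) (le : rel T) (Ha : antisymmetric le) (Ht : transitive le) z b0 :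
  strict le b0 z -> exists b, Defs.cover le b z.
Proof.
move=> hb0.
set A := [set u | strict le u z].
have hA : b0 \in A by rewrite inE.
case: (arg_maxnP (fun u => #|[set v | strict le v u]|) hA) => b hb hmax.
have hb' : strict le b z by have := (hb : b \in A); rewrite inE.
exists b. rewrite /Defs.cover /coverS !inE /= hb' /=.
apply/forallP => c; rewrite in_setT /=; apply/negP => /andP [hbc hcz].
have hc : c \in A by rewrite inE.
have := hmax c (hc : mem A c). rewrite /geq.
suff : (#|[set v | strict le v b]| < #|[set v | strict le v c]|)%N by rewrite ltnNge => /negP.
apply: proper_card; apply/properP; split.
  apply/subsetP => v; rewrite !inE /strict => /andP [hvb lvb].
  move/andP: hbc => [hbc' lbc]. apply/andP; split; last exact: Ht lvb lbc.
  apply/eqP => evc; subst v. have := Ha b c. rewrite lbc lvb => /(_ isT) ebc.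
  by rewrite ebc eqxx in hbc'.
exists b; rewrite !inE ?hbc //. by rewrite /strict eqxx.
Qed.

Lemma single (T : finType) (le : rel T) (Hr : reflexive le) (Ha : antisymmetric le) m :
  (forall b, ~~ strict le b m) -> maxchain le (ideal le m) [:: m].
Proof.
move=> hm. rewrite /maxchain /= /minimalS /maximalS /ideal !inE Hr /=.
split => //; apply/forallP => b; rewrite inE; apply/implyP => hb.
  exact: hm.
apply/negP => /andP [hne hmb]. have := Ha m b; rewrite hmb hb => /(_ isT) e.
by rewrite e eqxx in hne.
Qed.

Lemma coverS_mono (T : finType) (le : rel T) (Ht : transitive le) a b (hab : le a b) u v :
  coverS le (ideal le a) u v -> coverS le (ideal le b) u v.
Proof.
move=> /and4P [hu hv huv hc]. rewrite /ideal !inE in hu hv.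
apply/and4P; split => //.
- by rewrite /ideal inE; exact: Ht hu hab.
- by rewrite /ideal inE; exact: Ht hv hab.
apply/forallP => c; apply/negP => /and3P [hc1 hc2 hc3].
move/forallP: hc => /(_ c) /negP; apply. rewrite /ideal inE in hc1 *.
apply/and3P; split => //. rewrite inE. move/andP: hc3 => [_ hcv]; exact: Ht hcv hv.
Qed.

Lemma max_self (T : finType) (le : rel T) (Hr : reflexive le) (Ha : antisymmetric le) z :
  maximalS le (ideal le z) z.
Proof.
rewrite /maximalS /ideal inE Hr /=.
apply/forallP => c; rewrite inE; apply/implyP => hcb; apply/negP => /andP [hne hbc].
have := Ha z c; rewrite hbc hcb => /(_ isT) e. by rewrite e eqxx in hne.
Qed.

Lemma extend (T : finType) (le : rel T) (Hr : reflexive le) (Ha : antisymmetric le)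
  (Ht : transitive le) a b x0 s :
  maxchain le (ideal le a) (x0 :: s) -> last x0 s = a -> Defs.cover le a b ->
  maxchain le (ideal le b) (x0 :: rcons s b).
Proof.
move=> [hp hmin _] hl hc.
move: hc => /and4P [_ _ sab hno]. have hab : le a b by case/andP: sab.
rewrite /maxchain; split.
- rewrite rcons_path (sub_path (coverS_mono Ht hab) hp) hl /=. apply/and4P; split.
  + by rewrite /ideal inE.
  + by rewrite /ideal inE Hr.
  + exact: sab.
  + apply/forallP => c. move/forallP: hno => /(_ c). rewrite in_setT /= => hno'.
    apply/negP => /and3P [_ h1 h2]; move/negP: hno'; apply; by rewrite h1 h2.
- move: hmin => /andP [hx0 hmin]. rewrite /minimalS. apply/andP; split.
    rewrite /ideal inE in hx0; rewrite /ideal inE; exact: Ht hx0 hab.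
  apply/forallP => c; apply/implyP => hc. apply/negP => hcx.
  move/forallP: hmin => /(_ c); rewrite hcx implybF => /negP; apply.
  rewrite /ideal inE in hx0; rewrite /ideal inE. exact: Ht (andP hcx).2 hx0.
- rewrite last_rcons; exact: max_self.
Qed.

Lemma chain_exists (T : finType) (le : rel T) (Hr : reflexive le) (Ha : antisymmetric le)
  (Ht : transitive le) z :
  exists x0 s, maxchain le (ideal le z) (x0 :: s) /\ last x0 s = z.
Proof.
suff H : forall n z, (#|[set v | strict le v z]| < n)%N ->
   exists x0 s, maxchain le (ideal le z) (x0 :: s) /\ last x0 s = z.
  exact: H _ z (ltnSn _).
elim=> [//|n IH] {}z hn.
case: (pickP [pred b | strict le b z]) => [b0 hb0 | hnone].
- have [b hb] := cover_below Ha Ht hb0.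
  have sbz : strict le b z by move: hb => /and4P [].
  have hlt : (#|[set v | strict le v b]| < #|[set v | strict le v z]|)%N.
    apply: proper_card; apply/properP; split.
      apply/subsetP => v; rewrite !inE /strict => /andP [hvb lvb].
      move/andP: sbz => [hbz lbz]. apply/andP; split; last exact: Ht lvb lbz.
      apply/eqP => evc; subst v. have := Ha b z. rewrite lbz lvb => /(_ isT) ebc.
      by rewrite ebc eqxx in hbz.
    exists b; rewrite !inE ?sbz //. by rewrite /strict eqxx.
  rewrite ltnS in hn.
  have [x0 [s [hc hl]]] := IH b (leq_trans hlt hn).
  exists x0, (rcons s z). split; [exact: extend hc hl hb | by rewrite last_rcons].
- exists z, [::]. split => //. apply: single => // b. apply/negbT; exact: hnone b.
Qed.

Lemma edge_of (T : finType) (E : rel T) z u v :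
  coverS (connect E) (ideal (connect E) z) u v -> E u v.
Proof.
move=> /and4P [hu hv /andP [huv hc] hno].
case/connectP: hc => p hp hl; subst v.
move: hv huv hno. case: (shortenP hp) => p' hp' hu' _.
case: p' hp' hu' => [|c [|d q]] hp' hu'.
- by rewrite eqxx.
- by move: hp' => /= /andP [].
- move=> hv huv hno. exfalso. move/forallP: hno => /(_ c) /negP; apply.
  move: hu' => /= /andP [hu1 /andP [hc1 _]].
  have huc : connect E u c by apply: connect1; move: hp' => /= /andP [].
  have hcl : connect E c (last d q).
    apply/connectP; exists (d :: q) => //. by move: hp' => /= /andP [].
  rewrite /ideal inE in hv.
  apply/and3P; split.
  + rewrite /ideal inE; exact: connect_trans hcl hv.
  + rewrite /strict huc andbT. apply/eqP => e; subst c. by rewrite inE eqxx in hu1.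
  + rewrite /strict hcl andbT. apply/eqP => e. move: hc1; rewrite e. by rewrite mem_last.
Qed.

Import GRing.Theory Num.Theory.
Local Open Scope ring_scope.

Lemma weight_cons2 (T : finType) (w : T -> nat) a b s :
  weight w [:: a, b & s] = eps w a b + weight w (b :: s).
Proof. by rewrite /weight /= big_cons. Qed.

Lemma weight1 (T : finType) (w : T -> nat) a : weight w [:: a] = 0.
Proof. by rewrite /weight /= big_nil. Qed.

Lemma weight_rcons (T : finType) (w : T -> nat) x0 s b :
  weight w (x0 :: rcons s b) = weight w (x0 :: s) + eps w (last x0 s) b.
Proof.
elim: s x0 => [|y s IH] x0 /=; first by rewrite weight_cons2 !weight1 add0r addr0.
by rewrite !weight_cons2 IH addrA.
Qed.

Lemma weight_tele (T : finType) (R : rel T) (w : T -> nat) (rho : T -> int) :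
  (forall u v, R u v -> rho v = rho u + eps w u v) ->
  forall x0 s, path R x0 s -> weight w (x0 :: s) = rho (last x0 s) - rho x0.
Proof.
move=> H x0 s; elim: s x0 => [|y s IH] x0 /=; first by rewrite weight1 subrr.
move=> /andP [hr hp]. rewrite weight_cons2 IH // (H _ _ hr). lia.
Qed.

Lemma rho_cover (T : finType) (le : rel T) (w : T -> nat) (rho : T -> int)
  (Hr : reflexive le) (Ha : antisymmetric le) (Ht : transitive le)
  (Hrho : rank_fun le w rho) a b :
  Defs.cover le a b -> rho b = rho a + eps w a b.
Proof.
move=> hcov. have [x0 [s [hc hl]]] := chain_exists Hr Ha Ht a.
by rewrite -(Hrho _ _ hc) -(Hrho _ _ (extend Hr Ha Ht hc hl hcov)) weight_rcons hl.
Qed.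

Lemma rho_min (T : finType) (le : rel T) (w : T -> nat) (rho : T -> int)
  (Hr : reflexive le) (Ha : antisymmetric le)
  (Hrho : rank_fun le w rho) m :
  (forall b, ~~ strict le b m) -> rho m = 0.
Proof. by move=> hm; rewrite -(Hrho _ _ (single Hr Ha hm)) weight1. Qed.

Lemma main_rank (T : finType) (le : rel T) (w : T -> nat) (rho : T -> int)
  (Hr : reflexive le) (Ha : antisymmetric le) (Ht : transitive le)
  (Hrho : rank_fun le w rho) a b (hab : rho b = rho a + eps w a b) :
  rank_fun (add_cover le a b) w rho.
Proof.
set E := (fun u v => Defs.cover le u v || ((u == a) && (v == b))).
have hE : forall u v, E u v -> rho v = rho u + eps w u v.
  move=> u v /orP [hc | /andP [/eqP -> /eqP ->] //]. exact: rho_cover hc.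
move=> z [[] | x0 s [hp hmin hmax]].
have hp' : path E x0 s := sub_path (@edge_of T E z) hp.
rewrite (weight_tele hE hp').
have -> : last x0 s = z.
  move/andP: hmax => [hl hno]. apply/eqP; apply: contraT => hne.
  move/forallP: hno => /(_ z). rewrite /ideal inE.
  have -> : add_cover le a b z z by exact: connect0.
  rewrite /= /strict hne.
  rewrite /ideal inE in hl. by rewrite hl.
suff -> : rho x0 = 0 by rewrite subr0.
apply: (rho_min Hr Ha Hrho) => c; apply/negP => hc.
have [c' hc'] := cover_below Ha Ht hc.
move/andP: hmin => [hx0 hno]. move/forallP: hno => /(_ c') /implyP.
have h1 : add_cover le a b c' x0 by apply: connect1; rewrite /E hc'.
have hne : c' != x0 by move: hc' => /and4P [_ _ /andP [] ].
rewrite /ideal inE in hx0.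
have h2 : add_cover le a b c' z by exact: connect_trans h1 hx0.
rewrite /ideal inE h2 /strict hne h1 => /(_ isT). done.
Qed.

Lemma rank_cons (T : finType) (le : rel T) (w : T -> nat) (rho : T -> int) :
  rank_fun le w rho -> consistent le w.
Proof. by move=> H z c1 c2 h1 h2; rewrite (H z c1 h1) (H z c2 h2). Qed.

Unset Implicit Arguments.

Theorem lemma3p1 (T : finType) (le : rel T) (w : T -> nat) (rho : T -> int)
  (Hposet : is_poset le) (Hlab : is_labeling w)
  (Hcons : consistent le w) (Hrho : rank_fun le w rho)
  (Hmono : forall u v, rho u < rho v -> (w u < w v)%N)
  (x y : T) (Hxy : ~~ le x y) (Hyx : ~~ le y x) (Hr : rho y = rho x + 1) :
  (consistent (add_cover le x y) w /\ rank_fun (add_cover le x y) w rho) /\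
  (consistent (add_cover le y x) w /\ rank_fun (add_cover le y x) w rho).
Proof.
case: Hposet => Hre [Ha Ht].
have hw : (w x < w y)%N by apply: Hmono; rewrite Hr; lia.
have e1 : rho y = rho x + eps w x y by rewrite /eps hw.
have e2 : rho x = rho y + eps w y x by rewrite /eps ltnNge (ltnW hw) /= Hr; lia.
have r1 := main_rank Hre Ha Ht Hrho e1.
have r2 := main_rank Hre Ha Ht Hrho e2.
by split; split => //; [exact: rank_cons r1 | exact: rank_cons r2].
Qed.
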